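(* Let $\mathbb{F}$ be a field and $n,p,r$ integers with $0<r\le\min(n,p)$, and assume $|\mathbb{F}|>r+1$. Let $J_r := \begin{bmatrix} I_r & 0 \\ 0 & 0 \end{bmatrix}\in M_{n,p}(\mathbb{F})$ and $M = \begin{bmatrix} A & C \\ B & D \end{bmatrix}\in M_{n,p}(\mathbb{F})$ with $A\in M_r(\mathbb{F})$, $C\in M_{r,p-r}(\mathbb{F})$, $B\in M_{n-r,r}(\mathbb{F})$, $D\in M_{n-r,p-r}(\mathbb{F})$. If $\operatorname{rk}(J_r+tM)\le r$ for all $t\in\mathbb{F}$, then $D=0$ and $BA^kC=0$ for every integer $k\ge 0$. *)

(* Defs.v *)
From mathcomp Require Import all_boot all_algebra.
Set Implicit Arguments. Unset Strict Implicit. Unset Printing Implicit Defensive.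
Import GRing.Theory.
Local Open Scope ring_scope.

Definition Jr (F : fieldType) (r n' p' : nat) : 'M[F]_(r + n', r + p') :=
  block_mx (1%:M : 'M[F]_r) 0 0 0.

(* |F| > m, stated so that infinite fields are allowed: F has more than
   m pairwise distinct elements. *)
Definition card_gt (F : fieldType) (m : nat) : Prop :=
  exists s : seq F, uniq s /\ (m < size s)%N.

(* Main.v *)
Require Import Defs.
From mathcomp Require Import all_boot all_algebra.
From mathcomp Require Import fingroup perm zify ring lra.
Import GRing.Theory.
Local Open Scope ring_scope.

Lemma size_prod_seq (F : fieldType) (I : Type) (s : seq I) (f : I -> {poly F}) :
  (forall i, (size (f i) <= 2)%N) -> (size (\prod_(i <- s) f i)%R <= (size s).+1)%N.
Proof.
move=> hf; elim: s => [|a s IH]; first by rewrite big_nil size_poly1.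
rewrite big_cons /=; apply: leq_trans (size_polyMleq _ _) _.
have h := leq_add (hf a) IH.
rewrite (_ : (size s).+2 = (2 + (size s).+1).-1) //.
rewrite -!subn1; by rewrite leq_sub2r.
Qed.

Lemma size_prod_le2 (F : fieldType) n (f : 'I_n -> {poly F}) :
  (forall i, (size (f i) <= 2)%N) -> (size (\prod_i f i)%R <= n.+1)%N.
Proof.
move=> hf; have := @size_prod_seq F _ (enum 'I_n) f hf.
by rewrite big_enum size_enum_ord.
Qed.

Lemma size_det_le (F : fieldType) n (M : 'M[{poly F}]_n) :
  (forall i j, (size (M i j) <= 2)%N) -> (size (\det M)%R <= n.+1)%N.
Proof.
move=> hM; rewrite /determinant.
apply: (big_ind (fun p : {poly F} => (size p <= n.+1)%N)).
- by rewrite size_poly0.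
- move=> p q hp hq; apply: leq_trans (size_polyD _ _) _; by rewrite geq_max hp hq.
move=> s _.
have hp := @size_prod_le2 F n (fun i => M i ((s : {perm 'I_n}) i)) (fun i => hM i ((s : {perm 'I_n}) i)).
case: (odd_perm s); by rewrite /= ?expr1 ?expr0 ?mulN1r ?mul1r ?size_polyN.
Qed.

Lemma core (F : fieldType) (r : nat) (hF : card_gt F r.+1) (A : 'M[F]_r)
  (u : 'M[F]_(r,1)) (v : 'M[F]_(1,r)) (w : 'M[F]_1)
  (h : forall t : F, \det (block_mx (1%:M : 'M[F]_r) 0 0 (0 : 'M[F]_1) + t *: block_mx A u v w) = 0) :
  w 0 0 = 0 /\ forall k, (v *m A ^+ k *m u) 0 0 = 0.
Proof.
set J' := block_mx _ _ _ _ in h; set M' := block_mx A u v w in h.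
pose SX : 'M[{poly F}]_(r+1) := \matrix_(i,j) ((J' i j)%:P + (M' i j)%:P * 'X).
have hev t : (\det SX).[t] = \det (J' + t *: M').
  rewrite -horner_evalE -det_map_mx; congr (\det _); apply/matrixP=> i j.
  by rewrite /= !mxE horner_evalE !hornerE mulrC.
have hdet0 : \det SX = 0.
  apply/eqP; apply/negPn/negP => hne.
  case: hF => s [us hs].
  have hall : all (root (\det SX)) s by apply/allP => t _; rewrite /root hev h.
  have := max_poly_roots hne hall us.
  have : (size (\det SX) <= (r + 1).+1)%N.
    apply: size_det_le => i j; rewrite mxE.
    apply: leq_trans (size_polyD _ _) _; rewrite geq_max.
    apply/andP; split; first by apply: leq_trans (size_polyC_leq1 _) _.
    apply: leq_trans (size_polyMleq _ _) _; rewrite size_polyX.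
    have := size_polyC_leq1 (M' i j); lia.
  move=> h1 h2; have := leq_trans h2 h1; rewrite addn1 ltnS => h3.
  by have := leq_ltn_trans h3 hs; rewrite ltnn.
pose A' := map_mx polyC A; pose u' := map_mx polyC u;
pose v' := map_mx polyC v; pose w' := map_mx polyC w.
pose P : 'M[{poly F}]_r := 1%:M + 'X *: A'.
have hSX : SX = block_mx P ('X *: u') ('X *: v') ('X *: w').
  have -> : SX = map_mx polyC J' + 'X *: map_mx polyC M'.
    by apply/matrixP => i j; rewrite !mxE mulrC.
  by rewrite /J' /M' !map_block_mx map_mx1 !map_mx0 scale_block_mx add_block_mx !add0r.
pose Q := \adj P; pose q := \det P.
pose L := block_mx Q 0 (- ('X *: v') *m Q) (q%:M : 'M[{poly F}]_1).
have hLS : L *m SX = block_mx (q%:M) (Q *m ('X *: u')) 0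
     (q *: ('X *: w') - ('X *: v') *m Q *m ('X *: u')).
  rewrite hSX mulmx_block !mul0mx !addr0 mul_adj_mx; congr block_mx.
  - by rewrite !mulNmx -mulmxA mul_adj_mx mul_mx_scalar mul_scalar_mx addNr.
  - by rewrite mul_scalar_mx !mulNmx addrC.
have hE : q ^+ r * (q * ('X * (w 0 0)%:P) - 'X * ('X * (v' *m Q *m u') 0 0)) = 0.
  have := congr1 determinant hLS.
  rewrite det_mulmx hdet0 mulr0 det_ublock det_scalar det_mx11 => H; rewrite [RHS]H.
  congr (_ * _).
  by rewrite -scalemxAr -!scalemxAl !mxE.
  
have hq0 : q.[0] = 1.
  rewrite /q -horner_evalE -det_map_mx (_ : map_mx _ P = 1%:M) ?det1 //.
  apply/matrixP => i j; rewrite /= !mxE horner_evalE !hornerE.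
  by rewrite hornerMn !hornerE.
have qn0 : q != 0.
  by apply/eqP => hq; move: hq0; rewrite hq horner0 => /eqP; rewrite eq_sym oner_eq0.
move/eqP: hE; rewrite mulf_eq0 expf_eq0 (negbTE qn0) andbF /= mulrCA -mulrBr.
rewrite mulf_eq0 polyX_eq0 /= subr_eq0 => /eqP hE.
have hw : w 0 0 = 0.
  have := congr1 (fun p => p.[0]) hE; rewrite /= !hornerE hq0 mul1r.
  by [].
rewrite hw polyC0 mulr0 in hE.
have he0 : (v' *m Q *m u') 0 0 = 0.
  by move/eqP: hE; rewrite eq_sym mulf_eq0 polyX_eq0 /= => /eqP.
pose e k := (v' *m Q *m map_mx polyC (A ^+ k) *m u') 0 0.
have hQP k : Q *m P *m map_mx polyC (A ^+ k) =
    Q *m map_mx polyC (A ^+ k) + 'X *: (Q *m map_mx polyC (A ^+ k.+1)).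
  rewrite -mulmxA mulmxDl mul1mx -scalemxAl /A' -map_mxM exprS mulmxDr scalemxAr.
  by [].
have hid k : q * ((v *m A ^+ k *m u) 0 0)%:P = e k + 'X * e k.+1.
  have -> : ((v *m A^+k *m u) 0 0)%:P = (v' *m map_mx polyC (A^+k) *m u') 0 0.
    by rewrite -!map_mxM [RHS]mxE.
  have -> : forall M : 'M[{poly F}]_1, q * M 0 0 = (q *: M) 0 0 by move=> M; rewrite mxE.
  rewrite !scalemxAl -mul_mx_scalar -mul_adj_mx -/Q -/q.
  rewrite -(mulmxA v' (Q *m P)) hQP mulmxDr mulmxDl !mulmxA.
  rewrite -scalemxAr -scalemxAl.
  have hs : forall (a : {poly F}) (M : 'M[{poly F}]_1), (a *: M) 0 0 = a * M 0 0.
    by move=> a M; rewrite mxE.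
  by rewrite mxE hs mulmxA.
have hf k : e k = 0 -> (v *m A ^+ k *m u) 0 0 = 0.
  move=> ek; have := congr1 (fun p => p.[0]) (hid k); rewrite /= ek add0r.
  by rewrite !hornerE hq0 mul1r.
have hek : forall k, e k = 0.
  elim=> [|k IH]; first by rewrite /e expr0 map_mx1 mulmx1.
  have h1 := hid k; rewrite IH add0r hf // polyC0 mulr0 in h1.
  by move/eqP: h1; rewrite eq_sym mulf_eq0 polyX_eq0 /= => /eqP.
by split => // k; apply: hf.
Qed.

Theorem corollary8 (F : fieldType) (r n' p' : nat) (hr : (0 < r)%N)
  (hF : card_gt F r.+1)
  (A : 'M[F]_r) (C : 'M[F]_(r, p')) (B : 'M[F]_(n', r)) (D : 'M[F]_(n', p'))
  (hrk : forall t : F, (\rank (Jr F r n' p' + t *: block_mx A C B D)%R <= r)%N) :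
  D = 0 /\ (forall k : nat, B *m (A ^+ k) *m C = 0).
Proof.
have hent : forall m n (X : 'M[F]_(m, n)) i j, ((delta_mx 0 i : 'M_(1, m)) *m X *m (delta_mx j 0 : 'M_(n, 1))) 0 0 = X i j.
  by move=> m n X i j; rewrite -rowE -colE !mxE.
have main : forall i j, D i j = 0 /\ forall k, (B *m A ^+ k *m C) i j = 0.
  move=> i j.
  pose L : 'M[F]_(r + 1, r + n') := block_mx 1%:M 0 0 (delta_mx 0 i).
  pose R : 'M[F]_(r + p', r + 1) := block_mx 1%:M 0 0 (delta_mx j 0).
  have key t : block_mx (1%:M : 'M[F]_r) 0 0 (0 : 'M[F]_1) + t *: block_mx A (C *m delta_mx j 0)
       (delta_mx 0 i *m B) (delta_mx 0 i *m D *m delta_mx j 0)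
      = L *m (Jr F r n' p' + t *: block_mx A C B D) *m R.
    rewrite /Jr /L /R !scale_block_mx !add_block_mx !mulmx_block.
    rewrite !mul1mx !mulmx1 !mul0mx !mulmx0 !addr0 !add0r.
    congr block_mx.
    - by rewrite scalemxAl.
    - by rewrite scalemxAr.
    - by rewrite -scalemxAr -scalemxAl.
  have h t : \det (block_mx (1%:M : 'M[F]_r) 0 0 (0 : 'M[F]_1) + t *: block_mx A (C *m delta_mx j 0)
       (delta_mx 0 i *m B) (delta_mx 0 i *m D *m delta_mx j 0)) = 0.
    apply/eqP; apply/negPn/negP => hne.
    have : row_free (block_mx (1%:M : 'M[F]_r) 0 0 (0 : 'M[F]_1) + t *: block_mx A (C *m delta_mx j 0)
       (delta_mx 0 i *m B) (delta_mx 0 i *m D *m delta_mx j 0)).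
      by rewrite row_free_unit unitmxE unitfE.
    rewrite /row_free key => /eqP hrank.
    have := leq_trans (mxrankM_maxl _ R) (leq_trans (mxrankM_maxr L _) (hrk t)).
    by rewrite hrank addn1 ltnn.
  have [hw hk] := @core F r hF A _ _ _ h.
  split; first by rewrite -hent.
  move=> k; rewrite -hent -(hk k); congr (_ 0 0).
  by rewrite !mulmxA.
split; first by apply/matrixP => i j; rewrite (main i j).1 mxE.
by move=> k; apply/matrixP => i j; rewrite (main i j).2 mxE.
Qed.
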